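(* For any edge-coloured digraph $G$, the number $P(G,p)$ of proper vertex-colourings of $G$ using colours from $[p]=\{1,\dots,p\}$ is a polynomial in $p$.
   Context: An edge-coloured digraph is a finite simple digraph $G$ (no loops; for distinct vertices $a,b$ at most one edge from $a$ to $b$) in which every edge is of one of three types: dashed ($a\dashrightarrow b$), solid ($a\rightarrow b$) or double ($a\Rightarrow b$). A proper vertex-colouring with colours in $[p]$ is a function $\kappa:V(G)\to[p]$ such that for each edge $(a,b)$: $\kappa(a)\ne\kappa(b)$ if dashed, $\kappa(a)<\kappa(b)$ if solid, $\kappa(a)\le\kappa(b)$ if double. *)

(* Defs.v *)
From mathcomp Require Import all_boot all_order all_algebra.
Set Implicit Arguments. Unset Strict Implicit. Unset Printing Implicit Defensive.

Inductive edge_kind := Dashed | Solid | Double.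

Record ecdigraph (V : finType) := ECDigraph {
  edges : V -> V -> option edge_kind;
  no_loops : forall a, edges a a = None
}.

(* Colours in [p] = {1,...,p} are represented by 'I_p = {0,...,p-1}
   (an order-preserving shift by one). *)
Definition edge_ok (k : edge_kind) (x y : nat) : bool :=
  match k with
  | Dashed => x != y
  | Solid => x < y
  | Double => x <= y
  end.

Definition proper_colouring (V : finType) (G : ecdigraph V) (p : nat)
    (kappa : {ffun V -> 'I_p}) : bool :=
  [forall a, forall b,
     if edges G a b is Some k then edge_ok k (kappa a) (kappa b) else true].

Definition nb_colourings (V : finType) (G : ecdigraph V) (p : nat) : nat :=
  #|[set kappa : {ffun V -> 'I_p} | proper_colouring G kappa]|.

(* Main.v *)
Require Import Defs.
From mathcomp Require Import all_boot all_order all_algebra.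
From mathcomp Require Import zify.
Set Implicit Arguments. Unset Strict Implicit. Unset Printing Implicit Defensive.
Import GRing.Theory Num.Theory.

Definition binrep (f : nat -> nat) :=
  exists n (c : nat -> nat), forall p, f p = \sum_(k < n) c k * 'C(p, k).

Lemma binrep_ext f g : f =1 g -> binrep f -> binrep g.
Proof. move=> e [n [c H]]; exists n, c => p; by rewrite -e. Qed.

Lemma binrep0 : binrep (fun _ => 0).
Proof. exists 0, (fun _ => 0) => p; by rewrite big_ord0. Qed.

Lemma binrep_pad n (c : nat -> nat) m p : n <= m ->
  \sum_(k < n) c k * 'C(p, k) = \sum_(k < m) (if k < n then c k else 0) * 'C(p, k).
Proof.
move=> nm; rewrite (big_ord_widen m (fun k => c k * 'C(p,k))) //.
rewrite [RHS](bigID (fun k : 'I_m => k < n)) /= [X in _ = _ + X]big1 ?addn0.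
  by apply: eq_bigr => i ->.
by move=> i /negbTE ->.
Qed.

Lemma binrepD f g : binrep f -> binrep g -> binrep (fun p => f p + g p).
Proof.
move=> [n1 [c1 H1]] [n2 [c2 H2]].
exists (n1 + n2), (fun k => (if k < n1 then c1 k else 0) + (if k < n2 then c2 k else 0)) => p.
rewrite H1 H2 (@binrep_pad n1 c1 (n1 + n2)) ?leq_addr // (@binrep_pad n2 c2 (n1 + n2)) ?leq_addl //.
by rewrite -big_split; apply: eq_bigr => i _; rewrite mulnDl.
Qed.

Lemma binrep_sum (I : Type) (s : seq I) (P : pred I) (F : I -> nat -> nat) :
  (forall i, P i -> binrep (F i)) -> binrep (fun p => \sum_(i <- s | P i) F i p).
Proof.
move=> HF; elim: s => [|i s IH].
  by apply: binrep_ext binrep0 => p; rewrite big_nil.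
case Pi: (P i).
  apply: binrep_ext (binrepD (HF i Pi) IH) => p; by rewrite big_cons Pi.
by apply: binrep_ext IH => p; rewrite big_cons Pi.
Qed.

Lemma binrep_step f g : binrep g -> (forall p, f p.+1 = f p + g p) -> binrep f.
Proof.
move=> [n [c H]] Hf.
exists n.+1, (fun k => if k is k'.+1 then c k' else f 0) => p.
elim: p => [|p IH].
  rewrite big_ord_recl /= bin0 muln1 big1 ?addn0 // => i _; by rewrite bin0n /= muln0.
rewrite Hf IH H !big_ord_recl /= !bin0 !muln1 -addnA; congr (_ + _).
rewrite -big_split /=; apply: eq_bigr => i _.
by rewrite /bump /= !add1n binS mulnDr.
Qed.
Section PolyPart.
Local Open Scope ring_scope.

Definition Bpoly (k : nat) : {poly rat} :=
  ((k`!%:R : rat)^-1)%:P * \prod_(i < k) ('X - (i%:R)%:P).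

Lemma prod_ffact (p k : nat) :
  \prod_(i < k) ((p%:R : rat) - i%:R) = (p ^_ k)%:R.
Proof.
case: (leqP k p) => kp.
  rewrite ffact_prod natr_prod; apply: eq_bigr => i _.
  by rewrite natrB // ltnW // (leq_trans (ltn_ord i)).
rewrite ffact_small // (bigD1 (Ordinal kp)) //= subrr mul0r //.
Qed.

Lemma BpolyE k p : (Bpoly k).[p%:R] = ('C(p, k))%:R.
Proof.
rewrite /Bpoly hornerM hornerC horner_prod.
under eq_bigr => i _ do rewrite hornerXsubC.
rewrite prod_ffact -bin_ffact natrM mulrC mulfK //.
by rewrite pnatr_eq0 -lt0n fact_gt0.
Qed.

Lemma binrep_poly f : binrep f ->
  exists P : {poly rat}, forall p : nat, ((f p)%:R = P.[p%:R])%R.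
Proof.
move=> [n [c H]]; exists (\sum_(k < n) ((c k)%:R)%:P * Bpoly k) => p.
rewrite H natr_sum horner_sum; apply: eq_bigr => k _.
by rewrite hornerM hornerC BpolyE natrM.
Qed.

End PolyPart.

Section Main.
Variables (V : finType) (G : ecdigraph V).

Definition eok (a b : V) (x y : nat) :=
  if edges G a b is Some k then edge_ok k x y else true.

Definition good (A : {set V}) p (f : {ffun V -> 'I_p.+1}) :=
  [forall v, (v \in A) == (f v < p)] &&
  [forall a, forall b, (a \in A) ==> (b \in A) ==> eok a b (f a) (f b)].

Arguments good : clear implicits.
Definition cnt A p := #|[set f : {ffun V -> 'I_p.+1} | good A p f]|.

Definition allowed (A T : {set V}) :=
  [forall a, forall b, (a \in T) ==> (b \in A) ==> eok a b 1 (b \in T)].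

Definition topset p (f : {ffun V -> 'I_p.+2}) := [set v | f v == p :> nat].
Definition phi p (f : {ffun V -> 'I_p.+2}) : {ffun V -> 'I_p.+1} :=
  [ffun v => inord (minn (f v) p)].
Definition psi p (T : {set V}) (g : {ffun V -> 'I_p.+1}) : {ffun V -> 'I_p.+2} :=
  [ffun v => inord (if v \in T then p else if g v == p :> nat then p.+1 else g v)].

Arguments psi : clear implicits.

Lemma goodP (A : {set V}) p (f : {ffun V -> 'I_p.+1}) : reflect
  ((forall v, (v \in A) = (f v < p)) /\
   (forall a b, a \in A -> b \in A -> eok a b (f a) (f b))) (good A p f).
Proof.
apply: (iffP andP) => [[/forallP H1 /forallP H2]|[H1 H2]]; split.
- by move=> v; apply/eqP; apply: H1.
- by move=> a b aA bA; move: (H2 a) => /forallP/(_ b); rewrite aA bA.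
- by apply/forallP => v; rewrite H1.
- by apply/forallP => a; apply/forallP => b; apply/implyP => aA; apply/implyP; apply: H2.
Qed.

Lemma phiE p (f : {ffun V -> 'I_p.+2}) v : phi f v = minn (f v) p :> nat.
Proof. by rewrite ffunE inordK // ltnS geq_minr. Qed.

Lemma psiE p (T : {set V}) (g : {ffun V -> 'I_p.+1}) v : psi p T g v =
  (if v \in T then p else if g v == p :> nat then p.+1 else g v) :> nat.
Proof.
rewrite ffunE inordK //; case: ifP => // _; case: ifP => // _.
by rewrite ltnS ltnW // ltnS -ltnS.
Qed.

Lemma topsetE p (f : {ffun V -> 'I_p.+2}) v : (v \in topset f) = (f v == p :> nat).
Proof. by rewrite inE. Qed.

Lemma psi_phi p (f : {ffun V -> 'I_p.+2}) : psi p (topset f) (phi f) = f.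
Proof.
apply/ffunP => v; apply/val_inj => /=; rewrite psiE phiE topsetE.
have := ltn_ord (f v); case: eqP => [->//|ne] lt.
case: eqP => e; lia.
Qed.

Lemma phi_good (A : {set V}) p (f : {ffun V -> 'I_p.+2}) : good A p.+1 f -> good (A :\: topset f) p (phi f).
Proof.
move=> /goodP [H1 H2]; apply/goodP; split.
  move=> v; rewrite !inE H1 phiE; have := ltn_ord (f v).
  case: eqP => e; lia.
move=> a b; rewrite !inE => /andP [na aA] /andP [nb bA].
rewrite !phiE; have := H2 _ _ aA bA; rewrite H1 in aA; rewrite H1 in bA.
have -> : minn (f a) p = f a by lia.
by have -> : minn (f b) p = f b by lia.
Qed.

Lemma psi_good (A : {set V}) p (T : {set V}) (g : {ffun V -> 'I_p.+1}) : T \subset A -> allowed A T -> good (A :\: T) p g ->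
  good A p.+1 (psi p T g) && (topset (psi p T g) == T).
Proof.
move=> /subsetP TA /forallP al /goodP [H1 H2]; apply/andP; split; last first.
  apply/eqP/setP => v; rewrite topsetE psiE; have := ltn_ord (g v).
  case: (v \in T); first by rewrite eqxx.
  case E: (g v == p :> nat); move/eqP: E => E; lia.
apply/goodP; split.
  move=> v; rewrite psiE; have := H1 v; rewrite !inE.
  case vT: (v \in T) => /=; first by rewrite (TA _ vT) ltnSn.
  have := ltn_ord (g v); case: eqP => e; lia.
move=> a b aA bA; rewrite !psiE.
have ga := ltn_ord (g a); have gb := ltn_ord (g b).
case aT: (a \in T); case bT: (b \in T).
- move: (al a) => /forallP/(_ b); rewrite aT bA bT /eok /=.
  by case: (edges G a b) => // -[].
- have : g b < p by rewrite -H1 !inE bT bA.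
  move=> gbp; rewrite (ltn_eqF gbp).
  move: (al a) => /forallP/(_ b); rewrite aT bA bT /eok /=.
  case: (edges G a b) => // -[] //= _; lia.
- have : g a < p by rewrite -H1 !inE aT aA.
  move=> gap; rewrite (ltn_eqF gap).
  rewrite /eok; case: (edges G a b) => // -[] /=; lia.
- have gap : g a < p by rewrite -H1 !inE aT aA.
  have gbp : g b < p by rewrite -H1 !inE bT bA.
  rewrite (ltn_eqF gap) (ltn_eqF gbp).
  by apply: H2; rewrite !inE ?aT ?bT ?aA ?bA.
Qed.

Lemma phi_psi (A : {set V}) p (T : {set V}) (g : {ffun V -> 'I_p.+1}) : good (A :\: T) p g -> phi (psi p T g) = g.
Proof.
move=> /goodP [H1 _]; apply/ffunP => v; apply/val_inj => /=.
rewrite phiE psiE; have := ltn_ord (g v); have := H1 v; rewrite !inE.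
case: (v \in T) => /=; first by lia.
case: eqP => e; lia.
Qed.

Lemma fibre_cond (A : {set V}) p (f : {ffun V -> 'I_p.+2}) : good A p.+1 f -> (topset f \subset A) && allowed A (topset f).
Proof.
move=> /goodP [H1 H2]; apply/andP; split.
  by apply/subsetP => v; rewrite topsetE H1 => /eqP ->.
apply/forallP => a; apply/forallP => b; apply/implyP => aT; apply/implyP => bA.
have aA : a \in A by rewrite H1; move: aT; rewrite topsetE => /eqP ->.
have := H2 _ _ aA bA; move: aT; rewrite !topsetE => /eqP e.
have fb := ltn_ord (f b); have : f b < p.+1 by rewrite -H1.
rewrite /eok; case: (edges G a b) => // -[] /=; case: eqP => e2; lia.
Qed.

Lemma fibre (A : {set V}) p (T : {set V}) :
  #|[set f : {ffun V -> 'I_p.+2} | good A p.+1 f && (topset f == T)]| =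
  if (T \subset A) && allowed A T then cnt (A :\: T) p else 0.
Proof.
case: ifP => [cond|ncond]; last first.
  apply/eqP; rewrite cards_eq0; apply/eqP/setP => f; rewrite !inE.
  apply/negP => /andP [/fibre_cond]; case: eqP => // -> ; by rewrite ncond.
move/andP: cond => [TA al].
rewrite -(@card_in_imset _ _ (@phi p)); last first.
  move=> f1 f2; rewrite !inE => /andP [_ /eqP e1] /andP [_ /eqP e2] e.
  by rewrite -(psi_phi f1) -(psi_phi f2) e e1 e2.
rewrite /cnt; apply: eq_card => g; rewrite [in RHS]inE.
apply/imsetP/idP => [[f]|gg].
  by rewrite inE => /andP [/phi_good gf /eqP <-] ->.
exists (psi p T g); first by rewrite inE psi_good.
by rewrite (phi_psi gg).
Qed.

Lemma cnt_rec (A : {set V}) p :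
  cnt A p.+1 = \sum_(T : {set V} | (T \subset A) && allowed A T) cnt (A :\: T) p.
Proof.
rewrite /cnt -sum1_card (partition_big (@topset p) xpredT) //=.
rewrite [RHS]big_mkcond; apply: eq_bigr => T _.
rewrite -fibre -sum1_card; apply: eq_bigl => f; by rewrite !inE.
Qed.

End Main.

Lemma cnt_binrep (V : finType) (G : ecdigraph V) n (A : {set V}) :
  #|A| < n -> binrep (cnt G A).
Proof.
elim: n A => [|n IH] A //= hA.
pose g p := \sum_(T : {set V} | ((T \subset A) && allowed G A T) && (T != set0)) cnt G (A :\: T) p.
apply: (@binrep_step _ g).
  apply: binrep_sum => T /andP [/andP [TA _] Tn]; apply: IH.
  rewrite cardsD (setIidPr TA).
  have : 0 < #|T| by rewrite card_gt0.
  have : #|T| <= #|A| by apply: subset_leq_card.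
  lia.
move=> p; rewrite cnt_rec (bigD1 set0) /=; last first.
  rewrite sub0set /=; apply/forallP => a; apply/forallP => b; by rewrite inE.
by rewrite setD0.
Qed.

Lemma nb_cnt (V : finType) (G : ecdigraph V) p : nb_colourings G p = cnt G setT p.
Proof.
pose w (f : {ffun V -> 'I_p}) : {ffun V -> 'I_p.+1} := [ffun v => widen_ord (leqnSn p) (f v)].
rewrite /nb_colourings /cnt -(@card_in_imset _ _ w); last first.
  move=> f1 f2 _ _ e; apply/ffunP => v.
  have := congr1 (fun f : {ffun V -> 'I_p.+1} => nat_of_ord (f v)) e.
  rewrite /w !ffunE /= => h; exact: val_inj.
apply: eq_card => g; rewrite [in RHS]inE.
apply/imsetP/idP => [[f]|gg].
  rewrite inE => fp ->; apply/goodP; split.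
    by move=> v; rewrite inE ffunE /= ltn_ord.
  move=> a b _ _; move/forallP: fp => /(_ a) /forallP /(_ b).
  by rewrite /eok !ffunE.
move/goodP: gg => [H1 H2].
have H v : g v < p by rewrite -H1 inE.
exists [ffun v => Ordinal (H v)].
  rewrite inE; apply/forallP => a; apply/forallP => b.
  have := H2 a b (in_setT a) (in_setT b); by rewrite /eok !ffunE.
by apply/ffunP => v; apply/val_inj; rewrite /w !ffunE.
Qed.

Theorem mainTheorem5 (V : finType) (G : ecdigraph V) :
  exists P : {poly rat}, forall p : nat,
    ((nb_colourings G p)%:R = P.[p%:R])%R.
Proof.
have [P HP] := binrep_poly (cnt_binrep G (ltnSn #|[set: V]|)).
by exists P => p; rewrite nb_cnt.
Qed.
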